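(* Let $A$, $Q$ and $H\subseteq A^Q$ be non-empty finite sets and $\mathcal F$ a clone with carrier $A$ satisfying $\Delta^2$. Then $H\in\mathrm{Inv}_Q\mathcal F$ if and only if both of the following hold: (1) $H|_P\in\mathrm{Inv}_P\mathcal F$ for all $P\in[Q]^1\cup\{Q^{[B]}_H: B\in[A]^2\}$; (2) $H$ is decomposable over $[Q]^1\cup[Q]^{2,id}_H\cup\{Q^{[B]}_H:B\in[A]^2\}$.
   Context: $\mathcal O(A)=\bigcup_{n<\omega}A^{A^n}$; $\mathcal F_{[n]}=\mathcal F\cap A^{A^n}$. $A^2_2$ is the set of pairs $\mathbf a=a_0a_1\in A^2$ with $a_0\ne a_1$, $\mathrm{ran}\,\mathbf a=\{a_0,a_1\}$. A clone with carrier $A$ is a subset of $\mathcal O(A)$ containing all projections and closed under composition. For $f\in\mathcal O(A)_{[m]}$, $h_i\in A^Q$, $f(h_0,\dots,h_{m-1})$ is $q\mapsto f(h_0(q)\dots h_{m-1}(q))$; $\mathrm{Inv}_Q\mathcal F$ is the set of $H\subseteq A^Q$ closed under such compositions with $f\in\mathcal F$. $h|_P$ is the restriction of $h$ to $P\cap\mathrm{dom}\,h$, $H|_P=\{h|_P:h\in H\}$, $H(q)=\{h(q):h\in H\}$. For $R\subseteq Q$, $(H|_R)|^Q=\{f\in A^Q:f|_R\in H|_R\}$; $H$ is decomposable over $\mathscr R\subseteq\mathscr P(Q)$ if $H=\bigcap_{R\in\mathscr R}(H|_R)|^Q$. $[X]^k$ is the set of $k$-element subsets of $X$. $[Q]^{2,id}_H$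 is the set of $\{p,q\}\in[Q]^2$ with $h(p)=h(q)$ for all $h\in H$. For $B\subseteq A$, $Q^{[B]}_H=\{q\in Q: H(q)\subseteq B\}$. $\mathcal F$ satisfies $\Delta^2$ if for all $\mathbf a,\mathbf b\in A^2_2$ with $\mathrm{ran}\,\mathbf a\ne\mathrm{ran}\,\mathbf b$ and all $a\in\mathrm{ran}\,\mathbf a$, $b\in\mathrm{ran}\,\mathbf b$, there is $w\in\mathcal F_{[2]}$ with $w(\mathbf a)=a$, $w(\mathbf b)=b$ and $w(xx)=x$ for all $x\in A$. *)

(* Defs.v *)
From mathcomp Require Import all_boot.
Set Implicit Arguments. Unset Strict Implicit. Unset Printing Implicit Defensive.

Definition op (A : finType) (n : nat) := {ffun {ffun 'I_n -> A} -> A}.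

(* a set of operations, given arity-wise (F_[n] = F n) *)
Definition opset (A : finType) := forall n : nat, op A n -> Prop.

Definition is_clone (A : finType) (F : opset A) : Prop :=
  (forall n (i : 'I_n), F n [ffun x : {ffun 'I_n -> A} => x i]) /\
  (forall n m (f : op A m) (g : 'I_m -> op A n),
     F m f -> (forall i, F n (g i)) ->
     F n [ffun x : {ffun 'I_n -> A} => f [ffun i => g i x]]).

Definition pair2 (A : finType) (a0 a1 : A) : {ffun 'I_2 -> A} :=
  [ffun i : 'I_2 => if val i == 0 then a0 else a1].

Definition Delta2 (A : finType) (F : opset A) : Prop :=
  forall a0 a1 b0 b1 : A, a0 != a1 -> b0 != b1 ->
    [set a0; a1] != [set b0; b1] ->
    forall a b, a \in [set a0; a1] -> b \in [set b0; b1] ->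
    exists w : op A 2, [/\ F 2 w, w (pair2 a0 a1) = a, w (pair2 b0 b1) = b
                        & forall x, w (pair2 x x) = x].

Definition compose_pw (A D : finType) n (f : op A n) (h : 'I_n -> {ffun D -> A})
  : {ffun D -> A} := [ffun q => f [ffun i => h i q]].

Definition Inv (A D : finType) (F : opset A) (H : {set {ffun D -> A}}) : Prop :=
  forall n (f : op A n) (h : 'I_n -> {ffun D -> A}),
    F n f -> (forall i, h i \in H) -> compose_pw f h \in H.

Definition restr (A Q : finType) (P : {set Q}) (h : {ffun Q -> A})
  : {ffun {q : Q | q \in P} -> A} := [ffun q => h (val q)].

Definition restrset (A Q : finType) (P : {set Q}) (H : {set {ffun Q -> A}})
  : {set {ffun {q : Q | q \in P} -> A}} := [set restr P h | h in H].

Definition extend (A Q : finType) (R : {set Q}) (H : {set {ffun Q -> A}})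
  : {set {ffun Q -> A}} := [set f | restr R f \in restrset R H].

Definition decomposable (A Q : finType) (H : {set {ffun Q -> A}})
  (RR : {set {set Q}}) : Prop :=
  H = \bigcap_(R in RR) extend R H.

Definition singletons (Q : finType) : {set {set Q}} := [set [set q] | q : Q].

Definition pairs_id (A Q : finType) (H : {set {ffun Q -> A}}) : {set {set Q}} :=
  [set P : {set Q} | (#|P| == 2) &&
     [forall p in P, forall q in P, forall h in H, h p == h q]].

Definition QB (A Q : finType) (H : {set {ffun Q -> A}}) (B : {set A}) : {set Q} :=
  [set q | [forall h in H, h q \in B]].

Definition QB2 (A Q : finType) (H : {set {ffun Q -> A}}) : {set {set Q}} :=
  [set QB H B | B in [set B : {set A} | #|B| == 2]].

(* Main.v *)
Require Import Defs.
From mathcomp Require Import all_boot.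
From Stdlib Require Import Classical.
Set Implicit Arguments. Unset Strict Implicit. Unset Printing Implicit Defensive.

Definition agree (A Q : finType) (S : {set Q}) (h f : {ffun Q -> A}) :=
  forall q, q \in S -> h q = f q.

Definition realized (A Q : finType) (H : {set {ffun Q -> A}}) (S : {set Q})
  (f : {ffun Q -> A}) := exists2 h, h \in H & agree S h f.

Definition cond (A Q : finType) (H : {set {ffun Q -> A}}) (S : {set Q})
  (f : {ffun Q -> A}) :=
  [/\ (forall q, q \in S -> exists2 h, h \in H & h q = f q),
      (forall p q, p \in S -> q \in S -> p != q ->
          (forall h, h \in H -> h p = h q) -> f p = f q) &
      (forall B : {set A}, #|B| = 2 -> exists2 h, h \in H &
          forall q, q \in S -> (forall h', h' \in H -> h' q \in B) -> h q = f q)].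

Lemma cond_sub (A Q : finType) (H : {set {ffun Q -> A}}) (S S' : {set Q}) f :
  cond H S f -> S' \subset S -> cond H S' f.
Proof.
case=> c1 c2 c3 sub; split.
- by move=> q qS; apply: c1; apply: (subsetP sub).
- by move=> p q pS qS; apply: c2; apply: (subsetP sub).
- move=> B cB; have [h hH ha] := c3 B cB; exists h => // q qS; apply: ha.
  exact: (subsetP sub).
Qed.

Lemma three_in_two (T : finType) (B : {set T}) x y z : #|B| = 2 ->
  x \in B -> y \in B -> z \in B -> x != y -> x != z -> y != z -> False.
Proof.
move=> /eqP /cards2P [a [b [_ ->]]].
rewrite !in_set2.
by case/orP=> /eqP ->; case/orP=> /eqP ->; case/orP=> /eqP ->; rewrite ?eqxx.
Qed.

Lemma mix2 (A Q : finType) (H : {set {ffun Q -> A}}) (F : opset A) :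
  Delta2 F -> Inv F H ->
  forall (h g : {ffun Q -> A}) p q a b, h \in H -> g \in H -> h p != g p -> h q != g q ->
  [set h p; g p] != [set h q; g q] -> a \in [set h p; g p] -> b \in [set h q; g q] ->
  exists2 k, k \in H & [/\ k p = a, k q = b & forall t, h t = g t -> k t = h t].
Proof.
move=> hD hI h g p q a b hH gH np nq ns ha hb.
have [w [Fw w1 w2 w3]] := hD _ _ _ _ np nq ns a b ha hb.
pose hh := fun i : 'I_2 => if val i == 0 then h else g.
have hhH : forall i, hh i \in H by move=> i; rewrite /hh; case: (val i == 0).
have kH := hI 2 w hh Fw hhH.
have kE : forall t, compose_pw w hh t = w (pair2 (h t) (g t)).
  move=> t; rewrite /compose_pw ffunE; congr (w _); apply/ffunP => i.
  by rewrite !ffunE /hh; case: (val i == 0).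
exists (compose_pw w hh) => //; split; rewrite ?kE //.
by move=> t ht; rewrite kE ht w3.
Qed.
Lemma mainC (A Q : finType) (H : {set {ffun Q -> A}}) (F : opset A) :
  Delta2 F -> Inv F H -> H != set0 ->
  forall n (S : {set Q}) f, #|S| < n -> cond H S f -> realized H S f.
Proof.
move=> hD hI hH; elim=> [//|n IH] S f hS hc.
have IHS : forall t f', t \in S -> cond H (S :\ t) f' -> realized H (S :\ t) f'.
  move=> t f' tS c'; apply: IH => //.
  by rewrite (cardsD1 t) tS add1n ltnS in hS.
have [c1 c2 c3] := hc.
apply: NNPP => nR.
case: (boolP [exists ta, exists tb, (ta \in S) && (tb \in S) && (ta != tb)]); last first.
  move=> /existsPn nex; apply: nR.
  case: (set_0Vmem S) => [-> | [q qS]].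
    by case/set0Pn: hH => h hh; exists h => // s; rewrite inE.
  have [h hhH hq] := c1 q qS; exists h => // s sS.
  case: (eqVneq s q) => [-> // | ne].
  by move: (nex s) => /existsPn /(_ q); rewrite sS qS ne.
case/existsP=> ta /existsP [tb /andP [/andP [taS tbS] tab]].
have real : forall t, t \in S -> exists2 r, r \in H & agree (S :\ t) r f.
  move=> t tS; apply: IHS => //; apply: cond_sub hc _; exact: subsetDl.
have noteq : forall t r, t \in S -> r \in H -> agree (S :\ t) r f -> r t != f t.
  move=> t r tS rH ra; apply/eqP => e; apply: nR; exists r => // s sS.
  case: (eqVneq s t) => [-> // | ne]; apply: ra; by rewrite in_setD1 ne sS.
have range_eq : forall t t' r r', t \in S -> t' \in S -> t != t' -> r \in H -> r' \in H ->
    agree (S :\ t) r f -> agree (S :\ t') r' f -> [set f t; r t] = [set r' t'; f t'].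
  move=> t t' r r' tS t'S tt' rH r'H ra r'a; apply: NNPP => ne.
  have ht : r' t = f t by apply: r'a; rewrite in_setD1 tt' tS.
  have ht' : r t' = f t' by apply: ra; rewrite in_setD1 eq_sym tt' t'S.
  have n1 : r' t != r t by rewrite ht eq_sym; apply: noteq.
  have n2 : r' t' != r t' by rewrite ht'; apply: noteq.
  have n3 : [set r' t; r t] != [set r' t'; r t'] by rewrite ht ht'; apply/eqP.
  have a1 : f t \in [set r' t; r t] by rewrite ht set21.
  have b1 : f t' \in [set r' t'; r t'] by rewrite ht' set22.
  have [k kH [k1 k2 k3]] := mix2 hD hI r'H rH n1 n2 n3 a1 b1.
  apply: nR; exists k => // s sS.
  case: (eqVneq s t) => [-> // | st]; case: (eqVneq s t') => [-> // | st'].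
  have e1 : r' s = f s by apply: r'a; rewrite in_setD1 st' sS.
  have e2 : r s = f s by apply: ra; rewrite in_setD1 st sS.
  by rewrite k3 // e1 e2.
have [ra raH raa] := real ta taS.
pose B := [set f ta; ra ta].
have hB : forall t r, t \in S -> r \in H -> agree (S :\ t) r f -> [set f t; r t] = B.
  move=> t r tS rH rA; case: (eqVneq t ta) => [et | ne].
    rewrite et in rA *.
    have [rb rbH rba] := real tb tbS.
    by rewrite (range_eq ta tb r rb) // /B (range_eq ta tb ra rb).
  have := range_eq t ta r ra tS taS ne rH raH rA raa.
  by move=> ->; rewrite /B setUC.
have cardB : #|B| = 2 by rewrite /B cards2 eq_sym noteq.
have fB : forall t, t \in S -> f t \in B.
  by move=> t tS; have [r rH rA] := real t tS; rewrite -(hB t r) // set21.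
have rB : forall t r, t \in S -> r \in H -> agree (S :\ t) r f -> r t \in B.
  by move=> t r tS rH rA; rewrite -(hB t r) // set22.
have [t0 [h0 [t0S h0H cnB]]] : exists t0, exists h0, [/\ t0 \in S, h0 \in H & h0 t0 \notin B].
  apply: NNPP => nex; have [hq hqH hqa] := c3 B cardB.
  apply: nR; exists hq => // s sS; apply: hqa => // h' h'H.
  apply: NNPP => nb; apply: nex; exists s, h'; split => //; exact/negP.
have step3 : forall t0 c, t0 \in S -> (exists2 h, h \in H & h t0 = c) -> c \notin B ->
    forall t1, t1 \in S -> t1 != t0 ->
    (exists2 e, e \in H & agree (S :\ t0 :\ t1) e f /\ e t0 = c) /\
    (forall e, e \in H -> agree (S :\ t0 :\ t1) e f -> e t0 = c -> e t1 = c /\ f t1 != f t0).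
  move=> t0' c t0S' [hc0 hcH hct] cB t1 t1S t10.
  have [r0 r0H r0a] := real t0' t0S'.
  have hb0B : r0 t0' \in B by apply: rB.
  have hb0 : r0 t0' != f t0' by apply: noteq.
  have cb0 : c != r0 t0' by apply/eqP => e; move: cB; rewrite e hb0B.
  have r0t1 : r0 t1 = f t1 by apply: r0a; rewrite in_setD1 t10 t1S.
  have noeq0 : forall q, q \in S -> q != t0' -> ~ (forall h, h \in H -> h t0' = h q).
    move=> q qS q0 he; move/eqP: hb0; apply.
    rewrite he // (r0a q); last by rewrite in_setD1 q0 qS.
    by apply: esym; apply: c2 => //; rewrite eq_sym.
  split.
  - pose f2 := [ffun q => if q == t0' then c else f q].
    have cf2 : cond H (S :\ t1) f2.
      split.
      + move=> q; rewrite in_setD1 => /andP [_ qS]; rewrite ffunE.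
        case: (eqVneq q t0') => [-> | _]; first by exists hc0.
        exact: c1.
      + move=> p q; rewrite !in_setD1 => /andP [_ pS] /andP [_ qS] pq he.
        rewrite !ffunE.
        case: (eqVneq p t0') => [ep | np]; case: (eqVneq q t0') => [eq | nq].
        * by move: pq; rewrite ep eq eqxx.
        * by exfalso; apply: (noeq0 q qS nq); rewrite -ep.
        * by exfalso; apply: (noeq0 p pS np); rewrite -eq => h hH2; rewrite he.
        * exact: c2.
      + move=> B' cB'; case: (classic (forall h', h' \in H -> h' t0' \in B')) => [allB | nall].
          exfalso.
          have [hf hfH hft] := c1 t0' t0S'.
          apply: (three_in_two (x := f t0') (y := r0 t0') (z := c) cB').
          * by rewrite -hft; apply: allB.
          * exact: allB.
          * by rewrite -hct; apply: allB.
          * by rewrite eq_sym.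
          * by apply/eqP => e; move: cB; rewrite -e fB.
          * by rewrite eq_sym.
        have [h hH1 ha] := c3 B' cB'; exists h => // q; rewrite in_setD1 => /andP [_ qS] qB.
        rewrite ffunE; case: (eqVneq q t0') => [eq | nq]; last by apply: ha.
        by exfalso; apply: nall; rewrite -eq.
    have [e eH ea] := IHS t1 f2 t1S cf2.
    exists e => //; split.
    + move=> s; rewrite !in_setD1 => /andP [s1 /andP [s0 sS]].
      by rewrite ea ?ffunE ?(negbTE s0) // in_setD1 s1 sS.
    + by rewrite ea ?ffunE ?eqxx // in_setD1 eq_sym t10 t0S'.
  - move=> e eH ea ec.
    have et1 : e t1 != f t1.
      apply/eqP => ee.
      have eA : agree (S :\ t0') e f.
        move=> s; rewrite in_setD1 => /andP [s0 sS].
        case: (eqVneq s t1) => [-> // | s1]; apply: ea.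
        by rewrite !in_setD1 s1 s0 sS.
      by move: cB; rewrite -ec -(hB t0' e) // set22.
    have eqset : [set c; r0 t0'] = [set e t1; f t1].
      apply: NNPP => ne.
      have n1 : e t0' != r0 t0' by rewrite ec.
      have n2 : e t1 != r0 t1 by rewrite r0t1.
      have n3 : [set e t0'; r0 t0'] != [set e t1; r0 t1] by rewrite ec r0t1; apply/eqP.
      have a1 : c \in [set e t0'; r0 t0'] by rewrite ec set21.
      have b1 : f t1 \in [set e t1; r0 t1] by rewrite r0t1 set22.
      have [k kH [k1 k2 k3]] := mix2 hD hI eH r0H n1 n2 n3 a1 b1.
      have kA : agree (S :\ t0') k f.
        move=> s; rewrite in_setD1 => /andP [s0 sS].
        case: (eqVneq s t1) => [-> // | s1].
        have es : e s = f s by apply: ea; rewrite !in_setD1 s1 s0 sS.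
        have rs : r0 s = f s by apply: r0a; rewrite in_setD1 s0 sS.
        by rewrite k3 es // rs.
      by move: cB; rewrite -k1 -(hB t0' k) // set22.
    have ft1B := fB t1 t1S.
    have : f t1 \in [set c; r0 t0'] by rewrite eqset set22.
    rewrite in_set2 => /orP [/eqP fc | /eqP fb].
      by move: cB; rewrite -fc ft1B.
    have : e t1 \in [set c; r0 t0'] by rewrite eqset set21.
    rewrite in_set2 => /orP [/eqP -> | /eqP eb]; last by move: et1; rewrite eb fb eqxx.
    by split => //; rewrite fb.
have [t1 t1S t10] : exists2 t1, t1 \in S & t1 != t0.
  case: (eqVneq ta t0) => [e | ne]; last by exists ta.
  by exists tb => //; rewrite -e eq_sym.
have ex0 : exists2 h, h \in H & h t0 = h0 t0 by exists h0.
have [[e1 e1H [e1a e1c]] P1] := step3 t0 (h0 t0) t0S ex0 cnB t1 t1S t10.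
have [e1t1 f10] := P1 e1 e1H e1a e1c.
have ex1 : exists2 h, h \in H & h t1 = h0 t0 by exists e1.
case: (boolP [exists t2, (t2 \in S) && (t2 != t0) && (t2 != t1)]).
  case/existsP => t2 /andP [/andP [t2S t20] t21].
  have [[e2 e2H [e2a e2c]] P2] := step3 t0 (h0 t0) t0S ex0 cnB t2 t2S t20.
  have [_ f20] := P2 e2 e2H e2a e2c.
  have [[e3 e3H [e3a e3c]] P3] := step3 t1 (h0 t0) t1S ex1 cnB t2 t2S t21.
  have [_ f21] := P3 e3 e3H e3a e3c.
  apply: (three_in_two (x := f t0) (y := f t1) (z := f t2) cardB); rewrite ?fB //.
  - by rewrite eq_sym.
  - by rewrite eq_sym.
  - by rewrite eq_sym.
move=> /existsPn nex.
have vac : forall x y e, (x = t0 /\ y = t1) \/ (x = t1 /\ y = t0) -> agree (S :\ x :\ y) e f.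
  move=> x y e xy s; rewrite !in_setD1 => /andP [sy /andP [sx sS]].
  move: (nex s); rewrite sS /=.
  by case: xy => [[ex ey] | [ex ey]]; move: sx sy; rewrite ex ey => -> ->.
have [d dH dn] : exists2 d, d \in H & d t0 != d t1.
  apply: NNPP => nd; move/eqP: f10; apply; apply: esym; apply: c2 => //.
    by rewrite eq_sym.
  move=> h hH'; apply: NNPP => ne; apply: nd; exists h => //; exact/eqP.
have t01 : t0 != t1 by rewrite eq_sym.
have [_ P4] := step3 t1 (h0 t0) t1S ex1 cnB t0 t0S t01.
have d0c : d t0 != h0 t0.
  apply/eqP => e; have [e' _] := P1 d dH (vac _ _ _ (or_introl (conj erefl erefl))) e.
  by move: dn; rewrite e e' eqxx.
have d1c : d t1 != h0 t0.
  apply/eqP => e; have [e' _] := P4 d dH (vac _ _ _ (or_intror (conj erefl erefl))) e.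
  by move: dn; rewrite e e' eqxx.
have n1 : d t0 != e1 t0 by rewrite e1c.
have n2 : d t1 != e1 t1 by rewrite e1t1.
have n3 : [set d t0; e1 t0] != [set d t1; e1 t1].
  rewrite e1c e1t1; apply/eqP => E.
  have : d t0 \in [set d t1; h0 t0] by rewrite -E set21.
  by rewrite in_set2 (negbTE dn) (negbTE d0c).
have a1 : h0 t0 \in [set d t0; e1 t0] by rewrite e1c set22.
have b1 : d t1 \in [set d t1; e1 t1] by rewrite set21.
have [k kH [k1 k2 _]] := mix2 hD hI dH e1H n1 n2 n3 a1 b1.
have [k1' _] := P1 k kH (vac _ _ _ (or_introl (conj erefl erefl))) k1.
by move: d1c; rewrite -k2 k1' eqxx.
Qed.
Lemma restr_comp (A Q : finType) (P : {set Q}) n (f : op A n)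
  (hs : 'I_n -> {ffun Q -> A}) :
  restr P (compose_pw f hs) = compose_pw f (fun i => restr P (hs i)).
Proof. by apply/ffunP => q; rewrite !ffunE; congr (f _); apply/ffunP => i; rewrite !ffunE. Qed.

Lemma Inv_restr (A Q : finType) (H : {set {ffun Q -> A}}) (F : opset A) :
  Inv F H -> H != set0 -> forall P : {set Q}, Inv F (restrset P H).
Proof.
move=> hI hH P n f h' Ff hin.
case/set0Pn: hH => h0 h0H.
pose g := fun i => odflt h0 [pick x in H | restr P x == h' i].
have gH : forall i, g i \in H.
  by move=> i; rewrite /g; case: pickP => [x /andP [xH _] | ] //.
have gE : forall i, restr P (g i) = h' i.
  move=> i; case/imsetP: (hin i) => x xH hx; rewrite /g.
  case: pickP => [y /andP [_ /eqP] // | none].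
  by move: (none x); rewrite xH hx eqxx.
apply/imsetP; exists (compose_pw f g); first exact: hI.
rewrite restr_comp; apply/ffunP => q; rewrite !ffunE; congr (f _).
by apply/ffunP => i; rewrite !ffunE -gE !ffunE.
Qed.

Lemma restr_at (A Q : finType) (R : {set Q}) (x h : {ffun Q -> A}) :
  restr R x = restr R h -> forall q, q \in R -> h q = x q.
Proof.
move=> e q qR; have := congr1 (fun g : {ffun {q : Q | q \in R} -> A} => g (exist _ q qR)) e.
by rewrite !ffunE /= => ->.
Qed.

Theorem theorem3 (A Q : finType) (H : {set {ffun Q -> A}}) (F : opset A)
  (hA : 0 < #|A|) (hQ : 0 < #|Q|) (hH : H != set0)
  (hF : is_clone F) (hD : Delta2 F) :
  Inv F H <->
  ((forall P : {set Q}, P \in singletons Q :|: QB2 H -> Inv F (restrset P H)) /\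
   decomposable H (singletons Q :|: pairs_id H :|: QB2 H)).
Proof.
split.
- move=> hI; split; first by move=> P _; apply: Inv_restr.
  rewrite /decomposable; apply/setP => x; apply/idP/idP.
    by move=> xH; apply/bigcapP => R _; rewrite inE; apply/imsetP; exists x.
  move=> xin.
  have ext : forall R, R \in singletons Q :|: pairs_id H :|: QB2 H ->
      exists2 h, h \in H & agree R h x.
    move=> R RR; have := bigcapP xin R RR; rewrite inE => /imsetP [h hH' e].
    by exists h => //; apply: restr_at.
  have hc : cond H setT x.
    split.
    + move=> q _; have [|h hH' ha] := ext [set q].
        by rewrite !in_setU; apply/orP; left; apply/orP; left; apply/imsetP; exists q.
      by exists h => //; apply: ha; rewrite set11.
    + move=> p q _ _ pq he; have [|h hH' ha] := ext [set p; q].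
        rewrite !in_setU; apply/orP; left; apply/orP; right.
        rewrite inE cards2 pq /=; apply/forallP => p1; apply/implyP => p1R.
        apply/forallP => q1; apply/implyP => q1R; apply/forallP => g; apply/implyP => gH.
        move: p1R q1R; rewrite !in_set2.
        by case/orP => /eqP ->; case/orP => /eqP ->; rewrite ?he //.
      by rewrite -(ha p) ?set21 // -(ha q) ?set22 // he.
    + move=> B cB; have [|h hH' ha] := ext (QB H B).
        rewrite !in_setU; apply/orP; right; apply/imsetP; exists B => //.
        by rewrite inE cB.
      exists h => // q _ qB; apply: ha; rewrite inE; apply/forallP => g.
      by apply/implyP => gH; apply: qB.
  have [h hH' ha] := mainC hD hI hH (ltnSn #|[set: Q]|) hc.
  suff -> : x = h by [].
  by apply/ffunP => q; rewrite ha // inE.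
- move=> [h1 hdec] n f hs Ff hin.
  have comp1 : forall R, Inv F (restrset R H) -> restr R (compose_pw f hs) \in restrset R H.
    move=> R hR; rewrite restr_comp; apply: hR => // i.
    exact: imset_f.
  have : compose_pw f hs \in \bigcap_(R in singletons Q :|: pairs_id H :|: QB2 H) extend R H.
    apply/bigcapP => R RR; rewrite inE.
    case/setUP: RR => [/setUP [Rs | Rp] | Rq].
    + by apply: comp1; apply: h1; rewrite in_setU Rs.
    + rewrite inE in Rp; case/andP: Rp => /cards2P [p [q [pq eR]]] allE.
      have eqR : forall g, g \in H -> g p = g q.
        move=> g gH; move/forallP: allE => /(_ p) /implyP.
        rewrite eR set21 => /(_ isT) /forallP /(_ q) /implyP.
        by rewrite set22 => /(_ isT) /forallP /(_ g) /implyP /(_ gH) /eqP.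
      have sp : [set p] \in singletons Q :|: QB2 H.
        by rewrite in_setU; apply/orP; left; apply/imsetP; exists p.
      have := comp1 _ (h1 _ sp); case/imsetP => h hH' e.
      have hp := restr_at e (set11 p).
      apply/imsetP; exists h => //; apply/ffunP => -[s sR].
      rewrite [LHS]ffunE [RHS]ffunE /=.
      have kq : compose_pw f hs q = compose_pw f hs p.
        rewrite !ffunE; congr (f _); apply/ffunP => i; rewrite !ffunE.
        by rewrite eqR.
      move: sR; rewrite eR in_set2 => /orP [/eqP -> | /eqP ->] //.
        by rewrite kq -(eqR h hH') hp.
    + by apply: comp1; apply: h1; rewrite in_setU Rq orbT.
  by rewrite -hdec.
Qed.
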